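(* Let $n>1$ and $m\geq 1$ be integers with $m\leq n$. Then $\operatorname{ecc}_{Z_{n,m}}(0)=\lfloor\frac{n(m+1)}{2}\rfloor$, i.e. the maximum graph distance in $Z_{n,m}$ from the all-zero vertex $0$ to any vertex equals $\lfloor\frac{n(m+1)}{2}\rfloor$.
   Context: Elements of $\mathbb{Z}_n$ are identified with their representatives in $\{0,\dots,n-1\}$. The dYoke graph $Z_{n,m}$ has as vertices all $u=(u_0,\dots,u_{m+1})\in\mathbb{Z}_n\times\{-1,0,1\}^m\times\mathbb{Z}_n$ with $\sum_{i=0}^{m+1}u_i\equiv0\pmod n$; $u,v$ are adjacent if there is $0\leq i\leq m$ such that $u_j=v_j$ for all $j\notin\{i,i+1\}$ and either ($u_i=v_i+1$, $u_{i+1}=v_{i+1}-1$) or ($u_i=v_i-1$, $u_{i+1}=v_{i+1}+1$), arithmetic in coordinates $0,m+1$ being in $\mathbb{Z}_n$ and in coordinates $1,\dots,m$ in $\mathbb{Z}$. $0$ denotes the vertex $(0,\dots,0)$. *)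

(* Defs.v *)
From mathcomp Require Import all_boot all_order all_algebra.
Set Implicit Arguments. Unset Strict Implicit. Unset Printing Implicit Defensive.
Import Order.TTheory GRing.Theory Num.Theory.
Local Open Scope ring_scope.

(* A vertex of Z_{n,m} is represented by the sequence of integers
   [u_0; u_1; ...; u_m; u_{m+1}], where the Z_n-coordinates u_0, u_{m+1}
   are represented by their representatives in {0,...,n-1}. *)
Definition dyoke_vertex (n m : nat) (u : seq int) : Prop :=
  [/\ size u = m.+2,
      0 <= nth 0 u 0 < n%:Z,
      0 <= nth 0 u m.+1 < n%:Z,
      (forall i : nat, (1 <= i <= m)%N -> -1 <= nth 0 u i <= 1)
    & ((\sum_(x <- u) x) = 0 %[mod n%:Z])%Z ].

Definition coord_eq (n m j : nat) (a b : int) : Prop :=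
  if (j == 0)%N || (j == m.+1)%N then (a = b %[mod n%:Z])%Z else a = b.

Definition dyoke_adj (n m : nat) (u v : seq int) : Prop :=
  dyoke_vertex n m u /\ dyoke_vertex n m v /\
  exists i : nat, (i <= m)%N /\
    (forall j : nat, j != i -> j != i.+1 -> nth 0 u j = nth 0 v j) /\
    ((coord_eq n m i (nth 0 u i) (nth 0 v i + 1) /\
      coord_eq n m i.+1 (nth 0 u i.+1) (nth 0 v i.+1 - 1)) \/
     (coord_eq n m i (nth 0 u i) (nth 0 v i - 1) /\
      coord_eq n m i.+1 (nth 0 u i.+1) (nth 0 v i.+1 + 1))).

Definition dyoke_zero (m : nat) : seq int := nseq m.+2 0.

Fixpoint dyoke_walk (n m : nat) (x : seq int) (p : seq (seq int)) : Prop :=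
  match p with
  | [::] => dyoke_vertex n m x
  | y :: p' => dyoke_adj n m x y /\ dyoke_walk n m y p'
  end.

Definition dist_le (n m : nat) (u v : seq int) (k : nat) : Prop :=
  exists p : seq (seq int), dyoke_walk n m u p /\ last u p = v /\ (size p <= k)%N.

Definition is_dist (n m : nat) (u v : seq int) (d : nat) : Prop :=
  dist_le n m u v d /\ (forall k : nat, dist_le n m u v k -> (d <= k)%N).

Definition is_ecc (n m : nat) (x : seq int) (e : nat) : Prop :=
  [/\ dyoke_vertex n m x,
      (forall v, dyoke_vertex n m v -> exists d, is_dist n m x v d /\ (d <= e)%N)
    & exists v, dyoke_vertex n m v /\ is_dist n m x v e ].

(* Main.v *)
Require Import Defs.
From mathcomp Require Import all_boot all_order all_algebra.
From mathcomp Require Import zify ring.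
From Stdlib Require Import Classical.
Set Implicit Arguments. Unset Strict Implicit. Unset Printing Implicit Defensive.
Import Order.TTheory GRing.Theory Num.Theory.

Local Open Scope ring_scope.

Definition rawv (m : nat) (P : nat -> int) (j : nat) : int :=
  if j == 0%N then P 0%N
  else if (j <= m)%N then P j - P j.-1
  else if j == m.+1 then - P m else 0.

Definition normc (n m j : nat) (a : int) : int :=
  if (j == 0%N) || (j == m.+1) then (a %% n%:Z)%Z else a.

Definition build (n m : nat) (P : nat -> int) : seq int :=
  mkseq (fun j => normc n m j (rawv m P j)) m.+2.

Definition good (m : nat) (P : nat -> int) : Prop :=
  forall t : nat, (1 <= t <= m)%N -> -1 <= P t - P t.-1 <= 1.

Definition Fz (m : nat) (P : nat -> int) (c : int) : nat :=
  (\sum_(j < m.+1) `|P j - c|%N)%N.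

Definition Pof (u : seq int) (j : nat) : int := \sum_(t < j.+1) nth 0 u t.

Lemma nth_build n m P j : (j < m.+2)%N ->
  nth 0 (build n m P) j = normc n m j (rawv m P j).
Proof. by move=> hj; rewrite /build nth_mkseq. Qed.

Lemma size_build n m P : size (build n m P) = m.+2.
Proof. by rewrite size_mkseq. Qed.

Lemma sum_seq_nth (s : seq int) k : size s = k ->
  \sum_(x <- s) x = \sum_(t < k) nth 0 s t.
Proof. by move=> <-; rewrite (big_nth 0) big_mkord. Qed.

Lemma PofS u j : Pof u j.+1 = Pof u j + nth 0 u j.+1.
Proof. by rewrite /Pof big_ord_recr. Qed.

Lemma Pof0 u : Pof u 0 = nth 0 u 0.
Proof. by rewrite /Pof big_ord1. Qed.

Lemma Pof_build n m P j : (0 < n)%N -> (j <= m)%N ->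
  Pof (build n m P) j = P j - (P 0%N %/ n%:Z)%Z * n%:Z.
Proof.
move=> n0; elim: j => [|j IH] hj.
  rewrite Pof0 nth_build // /normc /rawv /=.
rewrite PofS IH ?(ltnW hj) // nth_build; last by lia.
rewrite /normc /rawv /=.
have -> : (j.+1 == m.+1) = false by apply/eqP; lia.
rewrite hj /=. ring.
Qed.

Lemma modz_shift (a q d : int) : ((a + q * d) %% d)%Z = (a %% d)%Z.
Proof. by rewrite addrC modzMDl. Qed.

Lemma build_vertex n m P : (0 < n)%N -> good m P -> dyoke_vertex n m (build n m P).
Proof.
move=> n0 gP; split.
- exact: size_build.
- rewrite nth_build // /normc /rawv /=. lia.
- rewrite nth_build // /normc /rawv /= eqxx ltnn /=. lia.
- move=> i /andP[i1 im]; rewrite nth_build; last by lia.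
  rewrite /normc /rawv.
  have -> : (i == 0%N) = false by apply/eqP; lia.
  have -> : (i == m.+1) = false by apply/eqP; lia.
  by rewrite im /=; apply: gP; rewrite i1 im.
- rewrite (sum_seq_nth (size_build n m P)) big_ord_recr.
  rewrite -/(Pof (build n m P) m) Pof_build //.
  rewrite nth_build // /normc /rawv /= eqxx ltnn /=.
  rewrite modzDmr.
  have -> : P m - (P 0%N %/ n)%Z * n + - P m = (- (P 0%N %/ n)%Z) * n%:Z by ring.
  by rewrite modzMl mod0z.
Qed.

Lemma sum_vertex m u : size u = m.+2 -> \sum_(x <- u) x = Pof u m + nth 0 u m.+1.
Proof. by move=> su; rewrite (sum_seq_nth su) big_ord_recr. Qed.

Lemma modz_eq0 (a d : int) : (a = 0 %[mod d])%Z -> a = (a %/ d)%Z * d.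
Proof. move=> h; have := divz_eq a d; rewrite h mod0z addr0; done. Qed.

Lemma Pof_good n m u : dyoke_vertex n m u -> good m (Pof u).
Proof.
case=> _ _ _ hmid _ t /andP[t1 tm].
case: t t1 tm => [//|t] _ tm /=; rewrite PofS.
by have := hmid t.+1; rewrite ltn0Sn tm addrAC subrr add0r => /(_ isT).
Qed.

Lemma build_Pof n m u : (0 < n)%N -> dyoke_vertex n m u -> build n m (Pof u) = u.
Proof.
move=> n0 hv; case: (hv) => su h0 hm1 hmid hsum.
apply: (@eq_from_nth _ 0); first by rewrite size_build su.
rewrite size_build => j hj; rewrite nth_build // /normc /rawv.
case: j hj => [|j] hj /=.
  by rewrite Pof0 modz_small.
case: (ltnP j m) => hjm.
  have -> : (j.+1 == m.+1) = false by apply/eqP; lia.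
  by rewrite PofS; ring.
have ej : j = m by lia.
subst j; rewrite eqxx /=.
rewrite (sum_vertex su) in hsum.
have e := modz_eq0 hsum.
have -> : - Pof u m = nth 0 u m.+1 + (- ((Pof u m + nth 0 u m.+1) %/ n)%Z) * n.
  by rewrite mulNr -e; ring.
by rewrite modz_shift modz_small.
Qed.

Lemma walk_rcons n m z p y : dyoke_walk n m z p ->
  dyoke_adj n m (last z p) y -> dyoke_walk n m z (rcons p y).
Proof.
elim: p z => [|a p IH] z /=.
  by move=> _ h; split => //; case: h => _ [] .
by case=> h1 h2 h3; split => //; apply: IH.
Qed.

Lemma dist_le_step n m z x y L : dist_le n m z x L -> dyoke_adj n m x y ->
  dist_le n m z y L.+1.
Proof.
case=> p [hw [hl hs]] hxy; exists (rcons p y); split.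
  by apply: walk_rcons => //; rewrite hl.
by rewrite last_rcons size_rcons.
Qed.

Lemma dist_le_mono n m x y L L' : (L <= L')%N -> dist_le n m x y L -> dist_le n m x y L'.
Proof. by move=> h [p [h1 [h2 h3]]]; exists p; split => //; split => //; apply: leq_trans h. Qed.

Lemma exists_dist n m x v k : dist_le n m x v k ->
  exists d, is_dist n m x v d /\ (d <= k)%N.
Proof.
elim: k {-2}k (leqnn k) => [|K IH] k hk hd.
  have k0 : k = 0%N by lia.
  subst k; exists 0%N; split => //; split => // k' _; done.
case: (classic (exists k', (k' < k)%N /\ dist_le n m x v k')).
  case=> k' [hk' hd']; have [d [hd1 hd2]] := IH k' ltac:(lia) hd'.
  by exists d; split => //; lia.
move=> hno; exists k; split => //; split => // k' hk'.
case: (leqP k k') => // hlt; exfalso; apply: hno; exists k'; done.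
Qed.

Definition upd (P : nat -> int) (i : nat) (s : int) : nat -> int :=
  fun j => if j == i then P j - s else P j.

Lemma rawv_upd m P i s j : (i <= m)%N ->
  rawv m (upd P i s) j = rawv m P j - (if j == i then s else 0) + (if j == i.+1 then s else 0).
Proof.
move=> im; rewrite /rawv /upd.
repeat case: ifP; move=> *; lia.
Qed.

Lemma coord_normc n m j (x c : int) :
  coord_eq n m j (normc n m j (x + c)) (normc n m j x + c).
Proof. rewrite /coord_eq /normc; case: ((j == 0%N) || (j == m.+1)) => //. by rewrite modz_mod modzDml. Qed.

Lemma adj_build n m P i s : (0 < n)%N -> good m P -> good m (upd P i s) ->
  (i <= m)%N -> (s = 1 \/ s = -1) ->
  dyoke_adj n m (build n m (upd P i s)) (build n m P).
Proof.
move=> n0 gP gP' im hs; split; first exact: build_vertex.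
split; first exact: build_vertex.
exists i; split => //; split.
  move=> j ji ji1; case: (ltnP j m.+2) => hj.
    rewrite !nth_build // rawv_upd // (negbTE ji) (negbTE ji1); congr normc; ring.
  by rewrite !nth_default // size_build.
have e1 : nth 0 (build n m (upd P i s)) i = normc n m i (rawv m P i + - s).
  rewrite nth_build; last by lia.
  rewrite rawv_upd // eqxx; have -> : (i == i.+1) = false by apply/eqP; lia.
  congr normc; ring.
have e2 : nth 0 (build n m (upd P i s)) i.+1 = normc n m i.+1 (rawv m P i.+1 + s).
  rewrite nth_build; last by lia.
  rewrite rawv_upd // eqxx; have -> : (i.+1 == i) = false by apply/eqP; lia.
  congr normc; ring.
have e3 : nth 0 (build n m P) i = normc n m i (rawv m P i) by rewrite nth_build //; lia.
have e4 : nth 0 (build n m P) i.+1 = normc n m i.+1 (rawv m P i.+1) by rewrite nth_build //; lia.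
rewrite e1 e2 e3 e4.
case: hs => ->.
  by right; split; apply: coord_normc.
by left; rewrite opprK; split; apply: coord_normc.
Qed.

Lemma argmax_ex (f : nat -> int) M : exists j, (j <= M)%N /\ forall t, (t <= M)%N -> f t <= f j.
Proof.
elim: M => [|M [j [hj hmax]]].
  by exists 0%N; split => // t; rewrite leqn0 => /eqP ->.
case: (lerP (f M.+1) (f j)) => h.
  exists j; split; first lia.
  move=> t; rewrite leq_eqVlt => /orP[/eqP -> //|]; rewrite ltnS; exact: hmax.
exists M.+1; split => // t; rewrite leq_eqVlt => /orP[/eqP -> //|]; rewrite ltnS.
move=> /hmax; lia.
Qed.

Lemma Fz_split m P c j (hj : (j < m.+1)%N) :
  Fz m P c = (`|P j - c|%N + \sum_(k < m.+1 | k != Ordinal hj) `|P k - c|%N)%N.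
Proof. by rewrite /Fz (bigD1 (Ordinal hj)). Qed.

Lemma step_lemma m P c j s : good m P -> (j <= m)%N -> (s = 1 \/ s = -1) ->
  0 < s * (P j - c) -> (forall t, (t <= m)%N -> s * (P t - c) <= s * (P j - c)) ->
  good m (upd P j s) /\ (Fz m (upd P j s) c).+1 = Fz m P c.
Proof.
move=> gP jm hs hpos hmax; split.
  move=> t ht; have g := gP t ht; have h1 := hmax t ltac:(lia).
  have h2 := hmax t.-1 ltac:(lia).
  rewrite /upd; case: (t =P j) => [et|nt]; [subst t| case: (t.-1 =P j) => [et|nt']; [subst j|]];
  move: hpos h1 h2 g; case: hs => ->; repeat case: ifP; move=> *; lia.
have hj : (j < m.+1)%N by lia.
rewrite (Fz_split (upd P j s) c hj) (Fz_split P c hj).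
have -> : (\sum_(k < m.+1 | k != Ordinal hj) `|upd P j s k - c|)%N =
          (\sum_(k < m.+1 | k != Ordinal hj) `|P k - c|)%N.
  apply: eq_bigr => k hk; rewrite /upd.
  have -> : (k == j :> nat) = false by apply/negbTE; exact: hk.
  done.
rewrite /upd eqxx; case: hs => hs; subst s; move: hpos; lia.
Qed.

Lemma build_const n m P (k : int) : (forall j, (j <= m)%N -> P j = k * n%:Z) ->
  build n m P = dyoke_zero m.
Proof.
move=> hP; apply: (@eq_from_nth _ 0); first by rewrite size_build size_nseq.
rewrite size_build => j hj; rewrite nth_build // nth_nseq hj /normc /rawv.
case: j hj => [|j] hj /=; first by rewrite hP // modzMl.
case: (ltnP j m) => hjm.
  have -> : (j.+1 == m.+1) = false by apply/eqP; lia.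
  by rewrite (hP j.+1 hjm) (hP j (ltnW hjm)) subrr.
have ej : j = m by lia.
by subst j; rewrite eqxx /= hP // -mulNr modzMl.
Qed.

Lemma zero_vertex n m : (0 < n)%N -> dyoke_vertex n m (dyoke_zero m).
Proof.
move=> n0; have e : build n m (fun _ => 0) = dyoke_zero m.
  by apply: (@build_const n m _ 0) => *; rewrite mul0r.
rewrite -e.
by apply: build_vertex => // t _; rewrite subrr.
Qed.

Lemma Fz_le m P c j : (j <= m)%N -> (`|P j - c| <= Fz m P c)%N.
Proof. move=> hj; rewrite (Fz_split P c (hj : (j < m.+1)%N)); lia. Qed.

Lemma reach n m : (0 < n)%N -> forall N P (k : int), good m P -> Fz m P (k * n%:Z) = N ->
  dist_le n m (dyoke_zero m) (build n m P) N.
Proof.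
move=> n0; elim=> [|N IH] P k gP hF.
  rewrite (@build_const n m P k).
    exists [::]; split => //; exact: zero_vertex.
  move=> j hj; have := Fz_le P (k * n%:Z) hj; rewrite hF; lia.
set c := k * n%:Z in hF.
have [s [hs [j [jm hj]]]] : exists s, (s = 1 \/ s = -1) /\ exists j, (j <= m)%N /\ 0 < s * (P j - c).
  case: (classic (exists j, (j <= m)%N /\ 0 < P j - c)).
    by case=> j [jm hj]; exists 1; split; [left|exists j; split => //; rewrite mul1r].
  move=> hno; case: (classic (exists j, (j <= m)%N /\ P j - c < 0)).
    by case=> j [jm hj]; exists (-1); split; [right|exists j; split => //; lia].
  move=> hno2; exfalso.
  have : Fz m P c = 0%N.
    rewrite /Fz big1 // => t _.
    have ht : (t <= m)%N by have := ltn_ord t; lia.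
    case: (ltrgtP (P t - c) 0) => h.
    - by exfalso; apply: hno2; exists t.
    - by exfalso; apply: hno; exists t.
    - by rewrite h.
  by rewrite hF.
have [j' [j'm hmax]] := argmax_ex (fun t => s * (P t - c)) m.
have hpos : 0 < s * (P j' - c) by have := hmax j jm; simpl; lia.
have [gP' hF'] := step_lemma gP j'm hs hpos hmax.
apply: (@dist_le_step _ _ _ (build n m (upd P j' s))).
  by apply: (IH _ k gP'); move: hF'; rewrite hF; case.
exact: adj_build.
Qed.

Lemma coord_exact n m j a b : (0 < j <= m)%N -> coord_eq n m j a b -> a = b.
Proof.
move=> hj; rewrite /coord_eq.
have -> : (j == 0%N) || (j == m.+1) = false by apply/negbTE; apply/negP; case/orP => /eqP; lia.
done.
Qed.

Lemma modz_diff (a b d : int) : (a = b %[mod d])%Z -> (b - a = 0 %[mod d])%Z.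
Proof.
move=> h; rewrite mod0z -modzDml -h modzDml subrr; exact: mod0z.
Qed.

Lemma adj_Pof n m u w : (0 < n)%N -> (1 <= m)%N -> dyoke_adj n m u w ->
  exists (c d : int) i, (i <= m)%N /\ `|d| <= 1 /\
    forall j, (j <= m)%N -> Pof w j = Pof u j + c * n%:Z + (if j == i then d else 0).
Proof.
move=> n0 m1 [hu [hw [i [im [heq halt]]]]].
have [s [hs [hi hi1]]] : exists s : int, (s = 1 \/ s = -1) /\
    coord_eq n m i (nth 0 u i) (nth 0 w i + s) /\
    coord_eq n m i.+1 (nth 0 u i.+1) (nth 0 w i.+1 - s).
  case: halt => [[h1 h2]|[h1 h2]]; first by exists 1; split; [left|].
  by exists (-1); split; [right|rewrite opprK].
pose c := ((nth 0 w 0 + (if i == 0%N then s else 0%R) - nth 0 u 0)%R %/ n%:Z)%Z.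
have hc : nth 0 w 0 - nth 0 u 0 = c * n%:Z - (if i == 0%N then s else 0).
  case: (i =P 0%N) => [ei|ni].
    subst i; have e := modz_eq0 (modz_diff hi).
    rewrite /c eqxx -e; ring.
  rewrite /c; have -> : (i == 0%N) = false by apply/eqP.
  have e0 : nth 0 u 0 = nth 0 w 0 by apply: heq; apply/eqP; lia.
  rewrite e0 !addr0 !subrr div0z mul0r; ring.
have hD : forall t, (0 < t <= m)%N ->
    nth 0 w t - nth 0 u t = - (if t == i then s else 0) + (if t == i.+1 then s else 0).
  move=> t ht; case: (t =P i) => [et|nt].
    subst t; have -> := coord_exact ht hi.
    have -> : (i == i.+1) = false by apply/eqP; lia.
    ring.
  case: (t =P i.+1) => [et|nt1].
    subst t; have -> := coord_exact ht hi1; ring.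
  rewrite heq; try by apply/eqP.
  ring.
exists c, (- s), i; split => //; split; first by case: hs => ->.
elim=> [|j IH] hj.
  rewrite !Pof0; move: hc; case: (0%N =P i) => [e|ne]; first by rewrite -e /=; lia.
  have -> : (i == 0%N) = false by apply/eqP; lia.
  lia.
rewrite !PofS IH; last by lia.
have := hD j.+1 ltac:(lia); rewrite eqSS.
case: (j =P i) => [e|ne]; case: (j.+1 =P i) => [e'|ne']; lia.
Qed.

Lemma Fz_adj n m u w (k : int) : (0 < n)%N -> (1 <= m)%N -> dyoke_adj n m u w ->
  exists k' : int, (Fz m (Pof w) (k' * n%:Z) <= (Fz m (Pof u) (k * n%:Z)).+1)%N.
Proof.
move=> n0 m1 hadj; have [c [d [i [im [hd hP]]]]] := adj_Pof n0 m1 hadj.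
exists (k + c); have hi : (i < m.+1)%N by lia.
rewrite (Fz_split (Pof w) _ hi) (Fz_split (Pof u) _ hi).
have -> : (\sum_(j < m.+1 | j != Ordinal hi) `|(Pof w j - (k + c) * n%:Z)%R|)%N =
          (\sum_(j < m.+1 | j != Ordinal hi) `|(Pof u j - k * n%:Z)%R|)%N.
  apply: eq_bigr => j hj; rewrite hP; last by have := ltn_ord j; lia.
  have -> : (j == i :> nat) = false by apply/negbTE; exact: hj.
  congr absz; ring.
rewrite hP // eqxx.
have -> : Pof u i + c * n%:Z + d - (k + c) * n%:Z = (Pof u i - k * n%:Z) + d by ring.
move: hd (Pof u i - k * n%:Z) (\sum_(j < m.+1 | j != Ordinal hi) `|(Pof u j - k * n%:Z)%R|)%N => hd x S; lia.
Qed.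

Lemma walk_Fz n m : (0 < n)%N -> (1 <= m)%N -> forall p x, dyoke_walk n m x p ->
  forall k : int, exists k' : int,
    (Fz m (Pof (last x p)) (k' * n%:Z) <= Fz m (Pof x) (k * n%:Z) + size p)%N.
Proof.
move=> n0 m1; elim=> [|y p IH] x /=.
  by move=> _ k; exists k; rewrite addn0.
case=> hxy hw k; have [k1 hk1] := Fz_adj k n0 m1 hxy.
have [k2 hk2] := IH y hw k1; exists k2; lia.
Qed.

Lemma Pof_zero m j : Pof (dyoke_zero m) j = 0.
Proof. by rewrite /Pof big1 // => t _; rewrite nth_nseq; case: ifP. Qed.

Lemma lower n m v L : (0 < n)%N -> (1 <= m)%N -> dist_le n m (dyoke_zero m) v L ->
  exists k : int, (Fz m (Pof v) (k * n%:Z) <= L)%N.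
Proof.
move=> n0 m1 [p [hw [hl hs]]]; have [k hk] := walk_Fz n0 m1 hw 0.
exists k; rewrite -hl; apply: (leq_trans hk).
have -> : Fz m (Pof (dyoke_zero m)) (0 * n%:Z) = 0%N.
  by rewrite /Fz big1 // => t _; rewrite Pof_zero mul0r subrr.
by rewrite add0n.
Qed.

Lemma path_bound m P : good m P -> forall d j0, (j0 + d <= m)%N ->
  (`|(P (j0 + d)%N - P j0)%R| <= d)%N.
Proof.
move=> gP; elim=> [|d IH] j0 h; first by rewrite addn0 subrr.
have g := gP (j0 + d.+1)%N ltac:(lia).
have := IH j0 ltac:(lia).
rewrite addnS /= in g *.
move: g; move: (P (j0 + d).+1) (P (j0 + d)%N) (P j0) => a b cc g.
have g1 : (-1 <= a - b <= 1) by exact: g.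
clear g IH gP h. lia.
Qed.

Lemma dist_bound m P j j0 : good m P -> (j <= m)%N -> (j0 <= m)%N ->
  (`|(P j - P j0)%R| <= `|(j%:Z - j0%:Z)%R|)%N.
Proof.
move=> gP hj hj0; case: (leqP j0 j) => h.
  have := @path_bound m P gP (j - j0)%N j0 ltac:(lia).
  rewrite subnKC //; lia.
have := @path_bound m P gP (j0 - j)%N j ltac:(lia).
rewrite subnKC; last lia. lia.
Qed.

Lemma sumdist M j0 : (j0 <= M)%N ->
  (2 * \sum_(j < M.+1) `|(j%:Z - j0%:Z)%R| <= M * M.+1)%N.
Proof.
elim: M j0 => [|M IH] j0 h.
  by rewrite big_ord1; have -> : j0 = 0%N by lia.
rewrite big_ord_recr /=.
case: (leqP j0 M) => hj.
  have := IH j0 hj; set S := (\sum_(i < M.+1) _)%N; nia.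
have ej : j0 = M.+1 by lia.
subst j0.
have -> : (\sum_(j < M.+1) `|((j : nat)%:Z - M.+1%:Z)%R|)%N =
          (\sum_(j < M.+1) (`|((j : nat)%:Z - M%:Z)%R| + 1))%N.
  apply: eq_bigr => j _; have := ltn_ord j; lia.
rewrite big_split /= sum1_card card_ord.
have := IH M (leqnn M); set S := (\sum_(i < M.+1) _)%N; nia.
Qed.

Lemma comb n m P : (0 < n)%N -> (m <= n)%N -> good m P -> 0 <= P 0%N < n%:Z ->
  exists k : int, (2 * Fz m P (k * n%:Z) <= n * m.+1)%N.
Proof.
move=> n0 mn gP hP0.
case: (classic (exists j (k : int), (j <= m)%N /\ P j = k * n%:Z)).
  case=> j0 [k [hj0 hk]]; exists k.
  have h1 : (Fz m P (k * n%:Z) <= \sum_(j < m.+1) `|((j : nat)%:Z - j0%:Z)%R|)%N.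
    rewrite /Fz; apply: leq_sum => j _; rewrite -hk.
    by apply: (@dist_bound m) => //; have := ltn_ord j; lia.
  have h2 := @sumdist m j0 hj0.
  have h3 : (m * m.+1 <= n * m.+1)%N by rewrite leq_mul2r mn orbT.
  move: h1 h2 h3; set S := (\sum_(j < m.+1) _)%N; lia.
move=> hno.
have pos : forall j, (j <= m)%N -> 0 < P j < n%:Z.
  elim=> [|j IH] hj.
    have : P 0%N <> 0 * n%:Z by move=> e; apply: hno; exists 0%N, 0.
    rewrite mul0r; lia.
  have := IH ltac:(lia); have := gP j.+1 ltac:(lia); rewrite /=.
  have : P j.+1 <> 0 * n%:Z by move=> e; apply: hno; exists j.+1, 0.
  have : P j.+1 <> 1 * n%:Z by move=> e; apply: hno; exists j.+1, 1.
  rewrite mul0r mul1r; lia.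
have hsum : (Fz m P (0 * n%:Z) + Fz m P (1 * n%:Z) = n * m.+1)%N.
  rewrite /Fz -big_split /=.
  rewrite (eq_bigr (fun _ => n)).
    by rewrite sum_nat_const card_ord mulnC.
  move=> j _; have := pos j ltac:(have := ltn_ord j; lia).
  rewrite mul0r mul1r; lia.
case: (leqP (Fz m P (0 * n%:Z)) (Fz m P (1 * n%:Z))) => h.
  exists 0; move: hsum h.
  move: (Fz m P (0 * n%:Z)) (Fz m P (1 * n%:Z)) (n * m.+1)%N => a b x; lia.
exists 1; move: hsum h.
move: (Fz m P (0 * n%:Z)) (Fz m P (1 * n%:Z)) (n * m.+1)%N => a b x; lia.
Qed.

Definition Pstar (n : nat) (j : nat) : int := (n./2)%:Z + (odd n && odd j)%:Z.

Lemma Pstar_good n m : good m (Pstar n).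
Proof. move=> t _; rewrite /Pstar; move: (odd n && odd t) (odd n && odd t.-1) => a b; lia. Qed.

Lemma Fz_ext m P Q c : (forall j, (j <= m)%N -> P j = Q j) -> Fz m P c = Fz m Q c.
Proof. by move=> h; apply: eq_bigr => j _; rewrite h //; have := ltn_ord j; lia. Qed.

Lemma sum_odd M : (\sum_(j < M) odd j = M./2)%N.
Proof. elim: M => [|M IH]; first by rewrite big_ord0. rewrite big_ord_recr /= IH; lia. Qed.

Lemma Pstar_lower n m (k : int) : (0 < n)%N ->
  ((n * m.+1) %/ 2 <= Fz m (Pstar n) (k * n%:Z))%N.
Proof.
move=> n0.
have hS : (\sum_(j < m.+1) `|Pstar n j|)%N = (m.+1 * n./2 + odd n * m.+1./2)%N.
  rewrite /Pstar (eq_bigr (fun j : 'I_m.+1 => n./2 + odd n * odd j)%N).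
    by rewrite big_split /= sum_nat_const card_ord -big_distrr /= sum_odd.
  by move=> j _; case: (odd n); case: (odd j).
have he : ((n * m.+1) %/ 2 = m.+1 * n./2 + odd n * m.+1./2)%N by nia.
case: (lerP k 0) => hk.
  have hc : k * n%:Z <= 0 by nia.
  apply: (@leq_trans (\sum_(j < m.+1) `|Pstar n j|)%N); first by rewrite hS he.
  apply: leq_sum => j _; move: hc; rewrite /Pstar.
  move: (k * n%:Z) (odd n && odd j) => c b; lia.
have hc : n%:Z <= k * n%:Z by nia.
apply: (@leq_trans (\sum_(j < m.+1) (n - `|Pstar n j|))%N).
  have hle : forall j : 'I_m.+1, (`|Pstar n j| <= n)%N.
    by move=> j; rewrite /Pstar; move: (odd_double_half n); case: (odd n); case: (odd j); lia.
  have : (\sum_(j < m.+1) (n - `|Pstar n j|) + \sum_(j < m.+1) `|Pstar n j| = n * m.+1)%N.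
    rewrite -big_split /= (eq_bigr (fun _ => n)); last by move=> j _; rewrite subnK ?hle.
    by rewrite sum_nat_const card_ord mulnC.
  rewrite hS he; move: (\sum_(j < m.+1) (n - `|Pstar n j|))%N => x.
  move: (odd_double_half n) (odd_double_half m.+1); nia.
apply: leq_sum => j _; move: hc; rewrite /Pstar.
move: (k * n%:Z) (odd n && odd j) (odd_double_half n) => c b; lia.
Qed.

Lemma upper n m v : (1 < n)%N -> (1 <= m)%N -> (m <= n)%N -> dyoke_vertex n m v ->
  dist_le n m (dyoke_zero m) v ((n * (m + 1)) %/ 2)%N.
Proof.
move=> n1 m1 mn hv.
have n0 : (0 < n)%N by lia.
have gP := Pof_good hv.
have hP0 : 0 <= Pof v 0%N < n%:Z by rewrite Pof0; case: hv.
have [k hk] := comb n0 mn gP hP0.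
have := @reach n m n0 (Fz m (Pof v) (k * n%:Z)) (Pof v) k gP erefl.
rewrite build_Pof //; apply: dist_le_mono.
move: hk; rewrite addn1; move: (Fz m (Pof v) (k * n%:Z)) (n * m.+1)%N => a b; lia.
Qed.

Local Close Scope ring_scope.
Unset Implicit Arguments.

Theorem theorem5p17 (n m : nat) :
  (1 < n)%N -> (1 <= m)%N -> (m <= n)%N ->
  is_ecc n m (dyoke_zero m) ((n * (m + 1)) %/ 2).
Proof.
move=> n1 m1 mn.
have n0 : (0 < n)%N by lia.
split.
- exact: zero_vertex.
- move=> v hv; apply: exists_dist; exact: upper.
- exists (build n m (Pstar n)).
  have hv : dyoke_vertex n m (build n m (Pstar n)) by apply: build_vertex => //; exact: Pstar_good.
  split => //; split; first exact: upper.
  move=> k hk; have [c hc] := lower n0 m1 hk.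
  apply: leq_trans hc.
  rewrite (@Fz_ext m _ (Pstar n)); last first.
    move=> j hj; rewrite Pof_build //.
    have -> : (Pstar n 0 %/ n%:Z)%Z = 0%R.
      apply: divz_small; rewrite /Pstar /=; lia.
    by rewrite GRing.mul0r GRing.subr0.
  rewrite addn1; exact: Pstar_lower.
Qed.
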